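(* Let $n,m,k$ be positive integers with $m\le n$. Let $W=(w_{ij})_{i,j=1}^m$ be a weighing matrix of order $m$ and weight $k$, and let $K_{i,j}$ ($i,j\in\{1,\ldots,m\}$) be $n\times n$ monomial $(0,1)$-matrices such that $\sum_{l=1}^mK_{i,l}K_{j,l}^\top$ is a $(0,1)$-matrix for all distinct $i,j$. For $i\in\{1,\ldots,m\}$ let $W_i$ be the $nm\times nm$ block matrix whose $(a,b)$-block is $w_{ab}K_{i,b}$ ($a,b\in\{1,\ldots,m\}$). Then (1) each $W_i$ is a weighing matrix of order $nm$ and weight $k$; (2) $W_1,\ldots,W_m$ are mutually quasi-unbiased weighing matrices for the parameters $(nm,k,k^2,1)$.
   Context: A weighing matrix of order $n$ and weight $k$ is an $n\times n$ $(0,1,-1)$-matrix $W$ with $WW^\top=kI_n$. A monomial $(0,1)$-matrix is a permutation matrix. Weighing matrices $W_1,W_2$ of order $n$ and weight $k$ are quasi-unbiased for parameters $(n,k,l,a)$ if $\frac1{\sqrt a}W_1W_2^\top$ is a weighing matrix of order $n$ and weight $l$; mutually quasi-unbiased means pairwise quasi-unbiased. *)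

(* Defs.v *)
From HB Require Import structures.
From mathcomp Require Import all_boot all_order all_algebra all_fingroup.
Set Implicit Arguments. Unset Strict Implicit. Unset Printing Implicit Defensive.
Import Order.TTheory GRing.Theory Num.Theory.
Local Open Scope ring_scope.

Definition weighing (R : rcfType) (N : nat) (A : 'M[R]_N) (k : nat) : Prop :=
  (forall i j, A i j \in [:: 0; 1; -1]) /\ A *m A^T = (k%:R)%:M.

Definition zero_one_mx (R : rcfType) (p q : nat) (A : 'M[R]_(p, q)) : Prop :=
  forall i j, A i j \in [:: 0; 1].

Definition quasi_unbiased (R : rcfType) (N : nat) (A B : 'M[R]_N)
    (k l a : nat) : Prop :=
  weighing A k /\ weighing B k /\
  weighing ((Num.sqrt (a%:R))^-1 *: (A *m B^T)) l.

(* The bijection 'I_(m*n) -> 'I_m * 'I_n : p = a*n + r  |->  (a, r)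
   (inverse of mathcomp's mxvec_index, row-major order). *)
Definition blk_idx (m n : nat) (p : 'I_(m * n)) : 'I_m * 'I_n :=
  enum_val (cast_ord (esym (mxvec_cast m n)) p).

Definition block_W (R : rcfType) (m n : nat) (W : 'M[R]_m)
    (K : 'I_m -> 'I_m -> 'M[R]_n) (i : 'I_m) : 'M[R]_(m * n) :=
  \matrix_(p, q)
    (W (blk_idx p).1 (blk_idx q).1 * K i (blk_idx q).1 (blk_idx p).2 (blk_idx q).2).

(* Main.v *)
Require Import Defs.
From HB Require Import structures.
From mathcomp Require Import all_boot all_order all_algebra all_fingroup.
From mathcomp Require Import ring.
Import Order.TTheory GRing.Theory Num.Theory.
Local Open Scope ring_scope.

Lemma blk_bij (m n : nat) : bijective (@blk_idx m n).
Proof.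
exists (fun x => cast_ord (mxvec_cast m n) (enum_rank x)) => [p|x].
  by rewrite /blk_idx enum_valK cast_ordKV.
by rewrite /blk_idx cast_ordK enum_rankK.
Qed.

Lemma sum_blk (R : rcfType) (m n : nat) (F : 'I_m * 'I_n -> R) :
  \sum_(p < m * n) F (blk_idx p) = \sum_(a < m) \sum_(r < n) F (a, r).
Proof.
rewrite pair_big /=.
rewrite (reindex (@blk_idx m n)) /=; last by apply: onW_bij; exact: blk_bij.
by apply: eq_bigr => p _; case: (blk_idx p).
Qed.


Lemma perm_entry (R : rcfType) n (A : 'M[R]_n) i j : is_perm_mx A -> A i j \in [:: 0; 1].
Proof.
case/is_perm_mxP => s ->; rewrite /perm_mx !mxE.
by case: (s i == j); rewrite !inE eqxx ?orbT.
Qed.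

Lemma blk_eq (m n : nat) (p q : 'I_(m * n)) :
  (p == q) = ((blk_idx p).1 == (blk_idx q).1) && ((blk_idx p).2 == (blk_idx q).2).
Proof.
rewrite -(inj_eq (bij_inj (blk_bij m n))).
by case: (blk_idx p) (blk_idx q) => [a b] [c d].
Qed.

Lemma blockE (R : rcfType) (m n : nat) (W : 'M[R]_m) (K : 'I_m -> 'I_m -> 'M[R]_n)
  i j p q :
  (block_W W K i *m (block_W W K j)^T) p q =
  \sum_(b < m) W (blk_idx p).1 b * W (blk_idx q).1 b *
      (K i b *m (K j b)^T) (blk_idx p).2 (blk_idx q).2.
Proof.
rewrite mxE.
under eq_bigr do rewrite !mxE.
rewrite (@sum_blk R m n (fun x => W (blk_idx p).1 x.1 * K i x.1 (blk_idx p).2 x.2 *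
   (W (blk_idx q).1 x.1 * K j x.1 (blk_idx q).2 x.2))).
apply: eq_bigr => b _; rewrite mxE big_distrr /=.
by apply: eq_bigr => t _; rewrite !mxE; ring.
Qed.

Lemma mem3M (R : rcfType) (x y : R) : x \in [:: 0; 1; -1] -> y \in [:: 0; 1; -1] ->
  x * y \in [:: 0; 1; -1].
Proof.
rewrite !inE => /or3P[]/eqP-> /or3P[]/eqP->;
  rewrite ?mul0r ?mulr0 ?mul1r ?mulr1 ?mulrNN ?mulr1 ?eqxx ?orbT //.
Qed.
Theorem lemma4p6 (R : rcfType) (n m k : nat) (hn : (0 < n)%N) (hm : (0 < m)%N)
    (hk : (0 < k)%N) (hmn : (m <= n)%N)
    (W : 'M[R]_m) (K : 'I_m -> 'I_m -> 'M[R]_n)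
    (hW : weighing W k)
    (hK : forall i j, is_perm_mx (K i j))
    (hsum : forall i j : 'I_m, i != j ->
       zero_one_mx (\sum_(l < m) K i l *m (K j l)^T)) :
  (forall i : 'I_m, weighing (block_W W K i) k) /\
  (forall i j : 'I_m, i != j ->
     quasi_unbiased (block_W W K i) (block_W W K j) k (k ^ 2) 1).
Proof.
have [hW1 hW2] := hW.
have part1 : forall i : 'I_m, weighing (block_W W K i) k.
  move=> i; split.
    move=> p q; rewrite mxE; apply: mem3M; first exact: hW1.
    by move: (@perm_entry R n _ (blk_idx p).2 (blk_idx q).2 (hK i (blk_idx q).1));
      rewrite !inE => /orP[]->; rewrite ?orbT.
  apply/matrixP => p q; rewrite blockE.
  have KK : forall b, K i b *m (K i b)^T = 1%:M.
    by move=> b; case/is_perm_mxP: (hK i b) => s ->;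
      rewrite tr_perm_mx -perm_mxM mulgV perm_mx1.
  under eq_bigr do rewrite KK.
  rewrite -big_distrl /=.
  have -> : \sum_(b < m) W (blk_idx p).1 b * W (blk_idx q).1 b
      = (W *m W^T) (blk_idx p).1 (blk_idx q).1.
    by rewrite mxE; apply: eq_bigr => b _; rewrite mxE.
  rewrite hW2 !mxE blk_eq.
  by case: (_ == _); case: (_ == _); rewrite /= ?mulr1n ?mulr0n ?mulr0 ?mul0r ?mulr1.
split => // i j ij; split; first exact: part1.
split; first exact: part1.
rewrite sqrtr1 invr1 scale1r.
set Bi := block_W W K i; set Bj := block_W W K j.
have [_ hBj] := part1 j; have [_ hBi] := part1 i.
split.
  move=> p q; rewrite blockE.
  set x := fun b => (K i b *m (K j b)^T) (blk_idx p).2 (blk_idx q).2.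
  have x01 : forall b, x b \in [:: 0; 1].
    by move=> b; apply: perm_entry; rewrite is_perm_mxMl // is_perm_mx_tr.
  have x0 : forall b, 0 <= x b.
    by move=> b; move: (x01 b); rewrite !inE => /orP[]/eqP->.
  have hs := hsum i j ij (blk_idx p).2 (blk_idx q).2.
  rewrite summxE -/x in hs.
  case: (pickP (fun b => x b == 1)) => [b0 /eqP hb0 | hnone].
    rewrite (bigD1 b0) // in hs. rewrite -/(x b0) hb0 in hs.
    have rest0 : \sum_(b < m | b != b0) x b = 0.
      move: hs; rewrite !inE => /orP[]/eqP h.
        have : 0 < 1 + \sum_(b < m | b != b0) x b.
          by apply: ltr_pwDl => //; apply: sumr_ge0 => b _; exact: x0.
        by rewrite h ltxx.
      by move/eqP: h; rewrite -subr_eq0 addrC addKr => /eqP.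
    have xz := psumr_eq0P (fun b _ => x0 b) rest0.
    rewrite (bigD1 b0) //= big1 ?addr0.
      rewrite -/(x b0) hb0 mulr1; apply: mem3M; exact: hW1.
    by move=> b hb; rewrite -/(x b) xz // mulr0.
  rewrite big1 ?inE ?eqxx //.
  move=> b _; have hx : x b = 0.
    by move: (x01 b) (hnone b); rewrite !inE /= => /orP[]/eqP -> //; rewrite eqxx.
  by rewrite -/(x b) hx mulr0.
have kn0 : (k%:R : R) != 0 by rewrite pnatr_eq0 -lt0n.
have hBj' : (k%:R^-1 *: Bj^T) *m Bj = 1%:M.
  apply: mulmx1C; rewrite -scalemxAr hBj scale_scalar_mx mulVf //.
have hBjT : Bj^T *m Bj = (k%:R)%:M.
  by rewrite -scalemx1 -hBj' -scalemxAl scalerA divff // scale1r.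
rewrite trmx_mul trmxK mulmxA -(mulmxA Bi) hBjT mul_mx_scalar -scalemxAl hBi.
by rewrite scale_scalar_mx natrX expr2.
Qed.
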